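(* Let $G$ be as in the context and assume $G\in\mathcal{RH}_\infty$. Let $K$ be a proper real rational transfer matrix (mapping $y$ to $u$). Then $K$ is a retrofit controller if and only if there exists $Q\in\mathcal{RH}_\infty$ such that $$K=(I+QG_{yu})^{-1}Q \qquad\text{and}\qquad G_{wu}\,Q\,G_{yv}=0 .$$ (Here $Q$ is the Youla parameter of $K$, namely $Q=K(I-G_{yu}K)^{-1}$.)
   Context: A subsystem is a proper real rational transfer matrix $G$ with inputs $(v,d,u)$ (interaction input, disturbance input, control input) and outputs $(w,z,y)$ (interaction output, evaluation output, measurement output): $$\begin{bmatrix} w\\ z\\ y\end{bmatrix}=\begin{bmatrix} G_{wv}&G_{wd}&G_{wu}\\ G_{zv}&G_{zd}&G_{zu}\\ G_{yv}&G_{yd}&G_{yu}\end{bmatrix}\begin{bmatrix} v\\ d\\ u\end{bmatrix}.$$ An environment is a proper real rational transfer matrix $\overline{G}$ closing the interaction loop by $v=\overline{G}w$; a (sub)controller is a proper real rational $K$ closing $u=Ky$. $\mathcal{RH}_\infty$ is the set of stable, proper, real rational transfer matrices. All feedback interconnections are assumed well-posed, and internal stability is meant in the standard sense (all closed-loop maps from signals injected at every interconnection point to all interconnection signals belong to $\mathcal{RH}_\infty$). For transfer matrices $H$ and $C$, the positive feedback system $y=Hu$, $u=Cy$ is denoted $\mathcal F(H,C)$, and $C$ is called a stabilizing controller for $H$ if $\mathcal F(H,C)$ is internally stable. The preexisting system is $G_{\rm pre}:=\mathcal F(\overline{G},G_{wv})$, i.e. the loop $w=G_{wv}v$, $v=\overline{G}w$.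 The set of admissible environments is $\overline{\mathcal G}:=\{\overline{G}: G_{\rm pre}\text{ is internally stable}\}$. A controller $u=Ky$ is a retrofit controller if the entire feedback system formed by $G$, $u=Ky$ and $v=\overline{G}w$ is internally stable for every $\overline{G}\in\overline{\mathcal G}$. *)

(* Defs.v *)
From HB Require Import structures.
From mathcomp Require Import all_boot all_order all_algebra.
From mathcomp Require Import fraction.
Set Implicit Arguments. Unset Strict Implicit. Unset Printing Implicit Defensive.
Import Order.TTheory GRing.Theory Num.Theory.
Local Open Scope ring_scope.

(* Scalar transfer functions: rational functions in s, i.e. elements of the
   fraction field of C[s], where C is a numeric algebraically closed field
   (playing the role of the complex numbers). *)
Definition tf (C : numClosedFieldType) := {fraction {poly C}}.

Definition real_poly (C : numClosedFieldType) (p : {poly C}) : Prop :=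
  p \is a polyOver Num.real.

Definition proper_real_rational (C : numClosedFieldType) (f : tf C) : Prop :=
  exists p q : {poly C},
    [/\ q != 0, real_poly p, real_poly q, (size p <= size q)%N
      & f = (tofrac p) / (tofrac q)].

Definition stable_tf (C : numClosedFieldType) (f : tf C) : Prop :=
  exists p q : {poly C},
    [/\ q != 0, real_poly p, real_poly q, (size p <= size q)%N
      & f = (tofrac p) / (tofrac q)] /\
    (forall z : C, root q z -> 'Re z < 0).

Definition prr_mx (C : numClosedFieldType) (m n : nat) (M : 'M[tf C]_(m, n)) :=
  forall i j, proper_real_rational (M i j).

Definition RHinf (C : numClosedFieldType) (m n : nat) (M : 'M[tf C]_(m, n)) :=
  forall i j, stable_tf (M i j).

(* Internal stability of the positive feedback system F(H, Ct):
   y = H u + e1, u = Ct y + e2.  The closed-loop map (e1,e2) |-> (y,u) is the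
   inverse of [[I, -H]; [-Ct, I]]; internal stability = well-posedness
   (invertibility) and all entries of this inverse in RH_infinity. *)
Definition int_stable (C : numClosedFieldType) (p m : nat)
  (H : 'M[tf C]_(p, m)) (Ct : 'M[tf C]_(m, p)) : Prop :=
  let A : 'M[tf C]_(p + m) := block_mx 1%:M (- H) (- Ct) 1%:M in
  A \in unitmx /\ RHinf (invmx A).

(* Retrofit controller: K such that for every proper real rational environment
   Gbar for which G_pre = F(Gbar, Gwv) is internally stable, the whole system
   (interconnection (v,u) -> (w,y) of G closed by v = Gbar w, u = K y) is
   internally stable. *)
Definition retrofit (C : numClosedFieldType) (nv nw nu ny : nat)
  (Gwv : 'M[tf C]_(nw, nv)) (Gwu : 'M[tf C]_(nw, nu))
  (Gyv : 'M[tf C]_(ny, nv)) (Gyu : 'M[tf C]_(ny, nu))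
  (K : 'M[tf C]_(nu, ny)) : Prop :=
  forall Gbar : 'M[tf C]_(nv, nw),
    prr_mx Gbar -> int_stable Gbar Gwv ->
    int_stable (block_mx Gwv Gwu Gyv Gyu) (block_mx Gbar 0 0 K).

(* Main.v *)
Require Import Defs.
From HB Require Import structures.
From mathcomp Require Import all_boot all_order all_algebra.
From mathcomp Require Import fraction.
From mathcomp Require Import ring lra zify.
Import Order.TTheory GRing.Theory Num.Theory.
Local Open Scope ring_scope.

Section Block.
Variable R : comUnitRingType.
Variables p m : nat.
Implicit Types (H : 'M[R]_(p, m)) (Ct : 'M[R]_(m, p)).

Definition Amx H Ct : 'M[R]_(p + m) := block_mx 1%:M (- H) (- Ct) 1%:M.

Lemma blockL H Ct X : X = Ct + Ct *m H *m X ->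
  Amx H Ct *m block_mx (1%:M + H *m X) (H + H *m X *m H) X (1%:M + X *m H) = 1%:M.
Proof.
move=> hX; rewrite /Amx mulmx_block (scalar_mx_block p m); congr block_mx.
- by rewrite !mul1mx mulNmx addrK.
- by rewrite mul1mx mulNmx mulmxDr mulmx1 mulmxA subrr.
- by rewrite mul1mx mulNmx mulmxDr mulmx1 mulmxA -hX addNr.
- rewrite mul1mx mulNmx mulmxDr !mulmxA -mulmxDl -mulmxA (mulmxA Ct H X) -hX.
  by rewrite addrCA addNr addr0.
Qed.

Lemma blockR H Ct X : X = Ct + X *m H *m Ct ->
  block_mx (1%:M + H *m X) (H + H *m X *m H) X (1%:M + X *m H) *m Amx H Ct = 1%:M.
Proof.
move=> hX; rewrite /Amx mulmx_block (scalar_mx_block p m); congr block_mx.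
- rewrite mulmx1 mulmxN mulmxDl -!mulmxA -mulmxDr (mulmxA X H Ct) -hX.
  by rewrite addrK.
- by rewrite mulmx1 mulmxN mulmxDl mul1mx addNr.
- by rewrite mulmxN mulmxDl mul1mx mulmx1 -hX subrr.
- by rewrite mulmxN !mulmx1 addrCA addNr addr0.
Qed.

Lemma blockL2 H Ct Y : Y = H + H *m Ct *m Y ->
  Amx H Ct *m block_mx (1%:M + Y *m Ct) Y (Ct + Ct *m Y *m Ct) (1%:M + Ct *m Y) = 1%:M.
Proof.
move=> hY; rewrite /Amx mulmx_block (scalar_mx_block p m); congr block_mx.
- by rewrite mul1mx mulNmx mulmxDr !mulmxA -mulmxDl -hY addrK.
- by rewrite mul1mx mulNmx mulmxDr mulmx1 mulmxA -hY subrr.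
- by rewrite mul1mx mulNmx mulmxDr mulmx1 mulmxA addNr.
- by rewrite mul1mx mulNmx addrCA addNr addr0.
Qed.
Lemma blockE H Ct (B : 'M[R]_(p + m)) :
  Amx H Ct *m B = 1%:M -> B *m Amx H Ct = 1%:M ->
  [/\ dlsubmx B = Ct + Ct *m H *m dlsubmx B,
      dlsubmx B = Ct + dlsubmx B *m H *m Ct,
      ursubmx B = H + H *m Ct *m ursubmx B &
      ursubmx B = H + ursubmx B *m Ct *m H].
Proof.
rewrite -{1 2}(submxK B) /Amx !mulmx_block (scalar_mx_block p m).
set P11 := ulsubmx B; set P12 := ursubmx B; set P21 := dlsubmx B; set P22 := drsubmx B.
move=> /eq_block_mx [e11 e12 e21 e22] /eq_block_mx [f11 f12 f21 f22].
rewrite ?mul1mx ?mulmx1 ?mulNmx ?mulmxN in e11 e12 e21 e22 f11 f12 f21 f22.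
have a21 : P21 = Ct *m P11 by apply/eqP; rewrite -subr_eq0 addrC e21.
have a11 : P11 = 1%:M + H *m P21 by apply/eqP; rewrite -subr_eq -e11.
have a12 : P12 = H *m P22 by apply/eqP; rewrite -subr_eq0 e12.
have a22 : P22 = 1%:M + Ct *m P12 by apply/eqP; rewrite -subr_eq addrC -e22.
have b12 : P12 = P11 *m H by apply/eqP; rewrite -subr_eq0 addrC f12.
have b11 : P11 = 1%:M + P12 *m Ct by apply/eqP; rewrite -subr_eq -f11.
have b21 : P21 = P22 *m Ct by apply/eqP; rewrite -subr_eq0 f21.
have b22 : P22 = 1%:M + P21 *m H by apply/eqP; rewrite -subr_eq addrC -f22.
split.
- by rewrite {1}a21 a11 mulmxDr mulmx1 mulmxA.
- by rewrite {1}b21 b22 mulmxDl mul1mx.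
- by rewrite {1}a12 a22 mulmxDr mulmx1 mulmxA.
- by rewrite {1}b12 b11 mulmxDl mul1mx.
Qed.
Lemma inv_of_right n (A B : 'M[R]_n) : A *m B = 1%:M -> invmx A = B.
Proof. move=> e; have [u _] := mulmx1_unit e. by rewrite -{1}(mulKmx u B) e mulmx1. Qed.
Lemma inv_of_left n (A B : 'M[R]_n) : B *m A = 1%:M -> invmx A = B.
Proof. move=> e; have [_ u] := mulmx1_unit e. by rewrite -{1}(mulmxK u B) e mul1mx. Qed.
End Block.
Arguments Amx {R p m}.
Arguments inv_of_right {R n A B}.
Arguments inv_of_left {R n A B}.

Lemma delta_sandwich (R : comRingType) (n m : nat) (j : 'I_n) (i : 'I_m) (A : 'M[R]_(m, n)) :
  delta_mx j i *m A *m delta_mx j i = A i j *: delta_mx j i.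
Proof.
apply/matrixP => k l; rewrite mxE (bigD1 j) //= big1 ?addr0; last first.
  by move=> t ht; rewrite [delta_mx j i t l]mxE (negbTE ht) /= mulr0.
rewrite mxE (bigD1 i) //= big1 ?addr0; last first.
  by move=> t ht; rewrite [delta_mx j i k t]mxE (negbTE ht) andbF /= mul0r.
rewrite !mxE !eqxx /= andbT.
by case: (k == j); case: (l == i); rewrite ?mul1r ?mul0r ?mulr0 ?mulr1.
Qed.

Lemma aux_x (R : comRingType) (x g w m h : R) :
  x * (1 - g * (w + m)) = g -> g * (1 + h * w) = h -> x * (1 - h * m) = h.
Proof.
move=> hx hg.
have key : x * (1 - h * m) - h = (x * (1 - g * (w + m)) - g) * (1 + h * w)
   + (g * (1 + h * w) - h) * (x * (w + m) + 1) by ring.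
by apply/eqP; rewrite -subr_eq0 key hx hg !subrr !mul0r addr0.
Qed.

Lemma aux_e (R : comRingType) (x g t : R) : x = g + g * (t * x) -> x * (1 - g * t) = g.
Proof. by move=> e; rewrite mulrBr mulr1 {1}e; ring. Qed.

Lemma aux_g (F : fieldType) (a b pw qw : F) :
  b != 0 -> qw != 0 -> b * qw + a * pw != 0 ->
  (a * qw) / (b * qw + a * pw) * (1 + a / b * (pw / qw)) = a / b.
Proof. by move=> hb hq hd; field; rewrite hb hq hd. Qed.

Lemma aux_c (F : fieldType) (X qx A b PM qm : F) :
  qx != 0 -> b != 0 -> qm != 0 ->
  X / qx * (1 - A / b * (PM / qm)) = A / b -> X * (b * qm - A * PM) = A * qx * qm.
Proof.
move=> h1 h2 h3 e.
have e1 : X / qx * (1 - A / b * (PM / qm)) * (qx * b * qm) = X * (b * qm - A * PM).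
  by field; rewrite h1 h2 h3.
have e2 : A / b * (qx * b * qm) = A * qx * qm by field.
by rewrite -e1 -e2 e.
Qed.

Section Scalar.
Context {C : numClosedFieldType}.
Local Notation tf := (tf C).
Local Notation "x %:F" := (tofrac x).

Lemma realP_D (p q : {poly C}) : real_poly p -> real_poly q -> real_poly (p + q).
Proof. move=> /polyOverP hp /polyOverP hq; apply/polyOverP => i; by rewrite coefD rpredD. Qed.
Lemma realP_M (p q : {poly C}) : real_poly p -> real_poly q -> real_poly (p * q).
Proof. move=> /polyOverP hp /polyOverP hq; apply/polyOverP => i.
rewrite coefM rpred_sum // => j _; by rewrite rpredM. Qed.
Lemma realP_N (p : {poly C}) : real_poly p -> real_poly (- p).
Proof. move=> /polyOverP hp; apply/polyOverP => i; by rewrite coefN rpredN. Qed.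
Lemma realP_1 : real_poly (1 : {poly C}).
Proof. apply/polyOverP => i; rewrite coefC; case: eqP => _; [exact: rpred1|exact: rpred0]. Qed.
Lemma realP_0 : real_poly (0 : {poly C}).
Proof. apply/polyOverP => i; rewrite coef0; exact: rpred0. Qed.

Lemma tofrac_neq0 (q : {poly C}) : q != 0 -> q%:F != 0 :> tf.
Proof. by rewrite tofrac_eq0. Qed.

Lemma stable0 : stable_tf (0 : tf).
Proof.
exists 0, 1; split; last by move=> z; rewrite /root hornerC oner_eq0.
split; rewrite ?oner_eq0 ?size_poly0 //; [exact: realP_0|exact: realP_1|].
by rewrite tofrac0 mul0r.
Qed.

Lemma stable1 : stable_tf (1 : tf).
Proof.
exists 1, 1; split; last by move=> z; rewrite /root hornerC oner_eq0.
split; rewrite ?oner_eq0 //; [exact: realP_1|exact: realP_1|].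
by rewrite tofrac1 divr1.
Qed.

Lemma stableN (f : tf) : stable_tf f -> stable_tf (- f).
Proof.
move=> [p [q [[q0 rp rq sz ->] hr]]].
exists (- p), q; split => //; split => //; first exact: realP_N.
  by rewrite size_polyN.
by rewrite tofracN mulNr.
Qed.

Lemma stableD (f g : tf) : stable_tf f -> stable_tf g -> stable_tf (f + g).
Proof.
move=> [p1 [q1 [[q10 rp1 rq1 sz1 ->] hr1]]] [p2 [q2 [[q20 rp2 rq2 sz2 ->] hr2]]].
exists (p1 * q2 + p2 * q1), (q1 * q2); split; last first.
  by move=> z; rewrite rootM => /orP [/hr1|/hr2].
split.
- by rewrite mulf_neq0.
- by apply: realP_D; apply: realP_M.
- exact: realP_M.
- apply: leq_trans (size_polyD _ _) _; rewrite (size_mul q10 q20).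
  have h1 := size_polyMleq p1 q2; have h2 := size_polyMleq p2 q1.
  have hq1 : (0 < size q1)%N by rewrite size_poly_gt0.
  have hq2 : (0 < size q2)%N by rewrite size_poly_gt0.
  have e : forall a b c d : nat, (a <= c -> b <= d -> (a + b).-1 <= (c + d).-1)%N by move=> *; lia.
  rewrite geq_max; apply/andP; split; [apply: leq_trans h1 _|apply: leq_trans h2 _].
    exact: e.
  by rewrite addnC; apply: e.
- have a1 : q1%:F != 0 :> tf by rewrite tofrac_eq0.
  have a2 : q2%:F != 0 :> tf by rewrite tofrac_eq0.
  rewrite (@addf_div _ (p1%:F) (q1%:F) (p2%:F) (q2%:F) a1 a2).
  by rewrite tofracD !tofracM.
Qed.

Lemma stableM (f g : tf) : stable_tf f -> stable_tf g -> stable_tf (f * g).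
Proof.
move=> [p1 [q1 [[q10 rp1 rq1 sz1 ->] hr1]]] [p2 [q2 [[q20 rp2 rq2 sz2 ->] hr2]]].
exists (p1 * p2), (q1 * q2); split; last first.
  by move=> z; rewrite rootM => /orP [/hr1|/hr2].
split.
- by rewrite mulf_neq0.
- exact: realP_M.
- exact: realP_M.
- apply: leq_trans (size_polyMleq _ _) _; rewrite (size_mul q10 q20).
  have e : forall a b c d : nat, (a <= c -> b <= d -> (a + b).-1 <= (c + d).-1)%N by move=> *; lia.
  exact: e.
- have a1 : q1%:F != 0 :> tf by rewrite tofrac_eq0.
  have a2 : q2%:F != 0 :> tf by rewrite tofrac_eq0.
  rewrite (@mulf_div _ (p1%:F) (q1%:F) (p2%:F) (q2%:F)).
  by rewrite !tofracM.
Qed.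

Lemma stableB (f g : tf) : stable_tf f -> stable_tf g -> stable_tf (f - g).
Proof. by move=> hf hg; apply: stableD => //; apply: stableN. Qed.

End Scalar.

Section Mats.
Context {C : numClosedFieldType}.
Local Notation tf := (tf C).

Lemma RHinf0 n m : RHinf (0 : 'M[tf]_(n, m)).
Proof. by move=> i j; rewrite mxE; apply: stable0. Qed.

Lemma stable_nat (b : bool) : stable_tf (b%:R : tf).
Proof. by case: b; [apply: stable1|apply: stable0]. Qed.

Lemma RHinf1 n : RHinf (1%:M : 'M[tf]_n).
Proof. by move=> i j; rewrite mxE; apply: stable_nat. Qed.

Lemma RHinfD n m (A B : 'M[tf]_(n, m)) : RHinf A -> RHinf B -> RHinf (A + B).
Proof. by move=> hA hB i j; rewrite mxE; apply: stableD. Qed.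

Lemma RHinfN n m (A : 'M[tf]_(n, m)) : RHinf A -> RHinf (- A).
Proof. by move=> hA i j; rewrite mxE; apply: stableN. Qed.

Lemma RHinfM n m k (A : 'M[tf]_(n, m)) (B : 'M[tf]_(m, k)) :
  RHinf A -> RHinf B -> RHinf (A *m B).
Proof.
move=> hA hB i j; rewrite mxE; apply: (big_ind (@stable_tf C)).
- exact: stable0.
- exact: stableD.
- by move=> l _; apply: stableM.
Qed.

Lemma RHinf_block n1 n2 m1 m2 (A : 'M[tf]_(n1, m1)) (B : 'M[tf]_(n1, m2))
  (D : 'M[tf]_(n2, m1)) (E : 'M[tf]_(n2, m2)) :
  RHinf A -> RHinf B -> RHinf D -> RHinf E -> RHinf (block_mx A B D E).
Proof.
move=> hA hB hD hE i j.
rewrite -(splitK i) -(splitK j).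
case: (split i) => i'; case: (split j) => j' /=.
- by rewrite block_mxEul.
- by rewrite block_mxEur.
- by rewrite block_mxEdl.
- by rewrite block_mxEdr.
Qed.

Lemma RHinf_ul n1 n2 m1 m2 (A : 'M[tf]_(n1 + n2, m1 + m2)) : RHinf A -> RHinf (ulsubmx A).
Proof. by move=> hA i j; rewrite !mxE. Qed.
Lemma RHinf_ur n1 n2 m1 m2 (A : 'M[tf]_(n1 + n2, m1 + m2)) : RHinf A -> RHinf (ursubmx A).
Proof. by move=> hA i j; rewrite !mxE. Qed.
Lemma RHinf_dl n1 n2 m1 m2 (A : 'M[tf]_(n1 + n2, m1 + m2)) : RHinf A -> RHinf (dlsubmx A).
Proof. by move=> hA i j; rewrite !mxE. Qed.
Lemma RHinf_dr n1 n2 m1 m2 (A : 'M[tf]_(n1 + n2, m1 + m2)) : RHinf A -> RHinf (drsubmx A).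
Proof. by move=> hA i j; rewrite !mxE. Qed.

Lemma RHinf_delta n m (h : tf) (i : 'I_n) (j : 'I_m) :
  stable_tf h -> RHinf (h *: delta_mx i j).
Proof. by move=> hh k l; rewrite !mxE; apply: stableM => //; apply: stable_nat. Qed.

Lemma int_stableL p m (H : 'M[tf]_(p, m)) Ct X : X = Ct + Ct *m H *m X ->
  RHinf (1%:M + H *m X) -> RHinf (H + H *m X *m H) -> RHinf X -> RHinf (1%:M + X *m H) ->
  int_stable H Ct.
Proof.
move=> hX h1 h2 h3 h4; have e := @blockL _ _ _ _ _ _ hX.
have [u _] := mulmx1_unit e.
change (Amx H Ct \in unitmx /\ RHinf (invmx (Amx H Ct))); split; first exact: u.
by rewrite (inv_of_right e); apply: RHinf_block.
Qed.

Lemma int_stableR p m (H : 'M[tf]_(p, m)) Ct X : X = Ct + X *m H *m Ct ->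
  RHinf (1%:M + H *m X) -> RHinf (H + H *m X *m H) -> RHinf X -> RHinf (1%:M + X *m H) ->
  int_stable H Ct.
Proof.
move=> hX h1 h2 h3 h4; have e := @blockR _ _ _ _ _ _ hX.
have [_ u] := mulmx1_unit e.
change (Amx H Ct \in unitmx /\ RHinf (invmx (Amx H Ct))); split; first exact: u.
by rewrite (inv_of_left e); apply: RHinf_block.
Qed.

Lemma int_stableL2 p m (H : 'M[tf]_(p, m)) Ct Y : Y = H + H *m Ct *m Y ->
  RHinf (1%:M + Y *m Ct) -> RHinf Y -> RHinf (Ct + Ct *m Y *m Ct) -> RHinf (1%:M + Ct *m Y) ->
  int_stable H Ct.
Proof.
move=> hY h1 h2 h3 h4; have e := @blockL2 _ _ _ _ _ _ hY.
have [u _] := mulmx1_unit e.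
change (Amx H Ct \in unitmx /\ RHinf (invmx (Amx H Ct))); split; first exact: u.
by rewrite (inv_of_right e); apply: RHinf_block.
Qed.

Lemma int_stableE p m (H : 'M[tf]_(p, m)) Ct : int_stable H Ct ->
  let B := invmx (Amx H Ct) in
  [/\ RHinf B, dlsubmx B = Ct + Ct *m H *m dlsubmx B,
      dlsubmx B = Ct + dlsubmx B *m H *m Ct,
      ursubmx B = H + H *m Ct *m ursubmx B &
      ursubmx B = H + ursubmx B *m Ct *m H].
Proof.
move=> [u hB] B.
have [e1 e2 e3 e4] := @blockE _ _ _ _ _ _ (mulmxV u) (mulVmx u).
by split.
Qed.

End Mats.

Ltac rhs := repeat first [ apply: RHinfD | apply: RHinfM | apply: RHinfN | apply: RHinf_block
  | apply: RHinf1 | apply: RHinf0 | assumption ].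

Theorem theorem1 (C : numClosedFieldType) (nv nd nu nw nz ny : nat)
  (Gwv : 'M[tf C]_(nw, nv)) (Gwd : 'M[tf C]_(nw, nd)) (Gwu : 'M[tf C]_(nw, nu))
  (Gzv : 'M[tf C]_(nz, nv)) (Gzd : 'M[tf C]_(nz, nd)) (Gzu : 'M[tf C]_(nz, nu))
  (Gyv : 'M[tf C]_(ny, nv)) (Gyd : 'M[tf C]_(ny, nd)) (Gyu : 'M[tf C]_(ny, nu))
  (HGwv : RHinf Gwv) (HGwd : RHinf Gwd) (HGwu : RHinf Gwu)
  (HGzv : RHinf Gzv) (HGzd : RHinf Gzd) (HGzu : RHinf Gzu)
  (HGyv : RHinf Gyv) (HGyd : RHinf Gyd) (HGyu : RHinf Gyu)
  (K : 'M[tf C]_(nu, ny)) (HK : prr_mx K) :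
  retrofit Gwv Gwu Gyv Gyu K <->
  exists Q : 'M[tf C]_(nu, ny),
    [/\ RHinf Q,
        (1%:M + Q *m Gyu) \in unitmx,
        K = invmx (1%:M + Q *m Gyu) *m Q
      & Gwu *m Q *m Gyv = 0].
Proof.
split.
- move=> hR.
  have prr0 : prr_mx (0 : 'M[tf C]_(nv, nw)).
    move=> i j; rewrite mxE; exists 0, 1; split; rewrite ?oner_eq0 ?size_poly0 //.
    + exact: realP_0.
    + exact: realP_1.
    + by rewrite tofrac0 mul0r.
  have pre0 : int_stable (0 : 'M[tf C]_(nv, nw)) Gwv.
    apply: (@int_stableL2 _ _ _ _ _ 0); rewrite ?mulmx0 ?mul0mx ?addr0 ?add0r //; rhs.
  have [sB e1 e2 _ _] := @int_stableE _ _ _ _ _ (hR 0 prr0 pre0).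
  set P := dlsubmx _ in e1 e2.
  have sP : RHinf P by apply: RHinf_dl.
  move: e1 e2; rewrite -(submxK P) !mulmx_block !add_block_mx.
  move=> /eq_block_mx [e11 e12 e21 e22] /eq_block_mx [f11 f12 f21 f22].
  rewrite ?mul0mx ?mulmx0 ?addr0 ?add0r in e11 e12 e21 e22 f11 f12 f21 f22.
  rewrite ?mul0mx ?mulmx0 ?addr0 ?add0r in e11 e12 e21 e22 f11 f12 f21 f22.
  rewrite e12 f21 ?mulmx0 ?mul0mx ?addr0 ?add0r in e22 f22.
  set Q0 := drsubmx P in e22 f22.
  have sQ0 : RHinf Q0 by apply: RHinf_dr.
  have hUV : (1%:M + Q0 *m Gyu) *m (1%:M - K *m Gyu) = 1%:M.
    have h : Q0 *m Gyu - Q0 *m Gyu *m (K *m Gyu) = K *m Gyu.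
      by rewrite {1}f22 mulmxDl !mulmxA addrK.
    by rewrite mulmxDl mul1mx mulmxBr mulmx1 h subrK.
  exists Q0; split.
  + exact: sQ0.
  + exact: (mulmx1_unit hUV).1.
  + by rewrite (inv_of_right hUV) mulmxBl mul1mx {1}e22 addrK.
  apply/matrixP => i j; rewrite [RHS]mxE.
  have sM : RHinf (Gwu *m Q0 *m Gyv) by rhs.
  case: (eqVneq ((Gwu *m Q0 *m Gyv) i j) 0) => // hm; exfalso.
  have [pm [qm [[qm0 rpm rqm szm em] hqm]]] := sM i j.
  have pm0 : pm != 0.
    by apply: contraNneq hm => pm0; rewrite em pm0 tofrac0 mul0r.
  have [n hn] : exists n : nat, ~~ root pm (n.+1)%:R.
    pose rs := [seq (k.+1)%:R | k <- iota 0 (size pm)] : seq C.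
    have urs : uniq rs.
      rewrite map_inj_uniq ?iota_uniq // => a1 a2 /eqP; rewrite eqr_nat eqSS.
      by move/eqP.
    have : ~~ all (root pm) rs.
      apply/negP => hall; have := max_poly_roots pm0 hall urs.
      by rewrite size_map size_iota ltnn.
    by case/allPn => x /mapP [k _ ->] hk; exists k.
  pose s0 : C := (n.+1)%:R.
  have s0r : s0 \is Num.real := realn _ _.
  have s0p : 0 < s0 := ltr0Sn _ _.
  have nroot : forall q : {poly C}, (forall z, root q z -> 'Re z < 0) -> ~~ root q s0.
    move=> q hq; apply/negP => /hq; rewrite (elimT (Creal_ReP _) s0r) => h.
    by have := lt_trans s0p h; rewrite ltxx.
  have pms0 : pm.[s0] != 0 by exact: hn.
  have qms0 : qm.[s0] != 0 by exact: (nroot _ hqm).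
  have s01 : s0 + 1 != 0 by rewrite lt0r_neq0 // ltr_wpDr.
  pose c : C := (s0 + 1) * qm.[s0] / pm.[s0].
  have cr : c \is Num.real.
    have qr : qm.[s0] \is Num.real by apply: rpred_horner.
    have pr : pm.[s0] \is Num.real by apply: rpred_horner.
    apply: rpredM; last by rewrite rpredV.
    by apply: rpredM => //; apply: rpredD => //; exact: rpred1.
  have c0 : c != 0 by rewrite mulf_neq0 ?mulf_neq0 ?invr_eq0.
  pose a : {poly C} := c%:P.
  pose b : {poly C} := 'X + 1%:P.
  have ra : real_poly a.
    apply/polyOverP => k; rewrite coefC; case: eqP => _ //; exact: rpred0.
  have rb : real_poly b.
    apply/polyOverP => k; rewrite coefD coefX coefC.
    by apply: rpredD; [exact: realn | case: eqP => _; [exact: rpred1|exact: rpred0]].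
  have sb : size b = 2 by rewrite size_XaddC.
  have sa : size a = 1 by rewrite size_polyC c0.
  have b0 : b != 0 by rewrite -size_poly_gt0 sb.
  have broot : forall z, root b z -> 'Re z < 0.
    move=> z; rewrite /root hornerD hornerX hornerC addr_eq0 => /eqP ->.
    have m1r : (-1 : C) \is Num.real by rewrite rpredN rpred1.
    by rewrite (elimT (Creal_ReP _) m1r) ltrN10.
  pose h : tf C := tofrac a / tofrac b.
  have sh : stable_tf h.
    by exists a, b; split => //; split => //; rewrite sa sb.
  have [pw [qw [[qw0 rpw rqw szw ew] hqw]]] := HGwv i j.
  pose d : {poly C} := b * qw + a * pw.
  have sbq : size (b * qw) = (size qw).+1 by rewrite size_mul // sb.
  have sap : (size (a * pw)%R <= size qw)%N.
    by apply: leq_trans (size_polyMleq _ _) _; rewrite sa add1n.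
  have sd : size d = (size qw).+1 by rewrite /d size_polyDl // sbq ltnS.
  have d0 : d != 0 by rewrite -size_poly_gt0 sd.
  pose g : tf C := tofrac (a * qw) / tofrac d.
  have hg : g * (1 + h * Gwv i j) = h.
    have bF : tofrac b != 0 :> tf C by rewrite tofrac_eq0.
    have qF : tofrac qw != 0 :> tf C by rewrite tofrac_eq0.
    have dF : tofrac b * tofrac qw + tofrac a * tofrac pw != 0 :> tf C.
      by rewrite -tofracM -tofracM -tofracD tofrac_eq0.
    rewrite /g /h ew /d tofracD !tofracM.
    exact: (@aux_g (tf C) (tofrac a) (tofrac b) (tofrac pw) (tofrac qw) bF qF dF).
  have pg : proper_real_rational g.
    exists (a * qw), d; split => //.
    - exact: realP_M.
    - by apply: realP_D; apply: realP_M.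
    - by rewrite sd; apply: leq_trans (size_polyMleq _ _) _; rewrite sa add1n.
  pose Gbar : 'M[tf C]_(nv, nw) := g *: delta_mx j i.
  pose Qb : 'M[tf C]_(nv, nw) := h *: delta_mx j i.
  have sQb : RHinf Qb by apply: RHinf_delta.
  have prrG : prr_mx Gbar.
    move=> k l; rewrite !mxE; case: ((k == j) && (l == i)); rewrite ?mulr1 ?mulr0 //.
    by have := prr0 k l; rewrite mxE.
  have preG : int_stable Gbar Gwv.
    apply: (@int_stableL2 _ _ _ _ _ Qb); last 4 first.
    + by rhs.
    + exact: sQb.
    + by rhs.
    + by rhs.
    rewrite /Gbar /Qb -scalemxAl -scalemxAr -scalemxAl scalerA delta_sandwich scalerA.
    rewrite -scalerDl; congr (_ *: _).
    by rewrite -{1}hg mulrDr mulr1 mulrA (mulrC g h).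
  have [sB' e1' _ _ _] := @int_stableE _ _ _ _ _ (hR Gbar prrG preG).
  set P' := dlsubmx _ in e1'.
  have sP' : RHinf P' by apply: RHinf_dl.
  move: e1'; rewrite -(submxK P') !mulmx_block !add_block_mx.
  move=> /eq_block_mx [g11 _ g21 _].
  rewrite ?mul0mx ?mulmx0 ?addr0 ?add0r in g11 g21.
  rewrite ?mul0mx ?mulmx0 ?addr0 ?add0r in g11 g21.
  set X11 := ulsubmx P' in g11 g21.
  set X21 := dlsubmx P' in g11 g21.
  have hV : (1%:M - K *m Gyu) *m X21 = K *m Gyv *m X11.
    by rewrite mulmxBl mul1mx {1}g21 addrK.
  have hUK : (1%:M + Q0 *m Gyu) *m K = Q0 by rewrite mulmxDl mul1mx -f22.
  have hX21 : X21 = Q0 *m Gyv *m X11.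
    by rewrite -[X21]mul1mx -hUV -mulmxA hV !mulmxA hUK.
  pose T := Gwv + Gwu *m Q0 *m Gyv.
  have h11 : X11 = Gbar + Gbar *m T *m X11.
    by rewrite {1}g11 hX21 /T mulmxDr mulmxDl !mulmxA.
  have hW : X11 = delta_mx j i *m (g *: (1%:M + T *m X11)).
    rewrite {1}h11 -scalemxAr [in RHS]mulmxDr mulmx1 scalerDr /Gbar -scalemxAl -scalemxAl.
    by rewrite mulmxA.
  have hET : delta_mx j i *m T *m X11 = T i j *: X11.
    by rewrite {1}hW !mulmxA delta_sandwich -scalemxAl -hW.
  have e : X11 j i = g + g * (T i j * X11 j i).
    rewrite {1}h11 /Gbar -!scalemxAl hET.
    set t := T i j.
    rewrite [LHS]mxE [in X in X + _ = _]mxE [in X in _ + X = _]mxE.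
    rewrite [in X in _ * X + _ = _]mxE [in X in _ + _ * X = _]mxE !eqxx /=.
    by rewrite mulr1.
  have hT : T i j = Gwv i j + (Gwu *m Q0 *m Gyv) i j by rewrite /T mxE.
  have hx := @aux_e _ _ _ _ e; rewrite hT in hx.
  have xh := @aux_x _ _ _ _ _ _ hx hg.
  have sX11 : RHinf X11 by apply: RHinf_ul.
  have [px [qx [[qx0 _ _ _ ex] hqx]]] := sX11 j i.
  rewrite ex em /h in xh.
  have qxF : tofrac qx != 0 :> tf C by rewrite tofrac_eq0.
  have bF : tofrac b != 0 :> tf C by rewrite tofrac_eq0.
  have qmF : tofrac qm != 0 :> tf C by rewrite tofrac_eq0.
  have := @aux_c (tf C) _ _ _ _ _ _ qxF bF qmF xh.
  rewrite -!tofracM -tofracB -tofracM.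
  move/eqP; rewrite tofrac_eq => /eqP /(congr1 (fun p => p.[s0])).
  rewrite /= !hornerM hornerD hornerN !hornerM /b /a hornerD hornerX !hornerC.
  have -> : c * pm.[s0] = (s0 + 1) * qm.[s0] by rewrite /c divfK.
  rewrite subrr mulr0 => /esym/eqP.
  have qxs0 : qx.[s0] != 0 by exact: (nroot _ hqx).
  by apply/negP; apply: mulf_neq0 => //; apply: mulf_neq0.
- move=> [Q [hQ hU hK hM]] Gbar hGbar hpre.
  have [sB _ _ _ hQb] := @int_stableE _ _ _ _ _ hpre.
  set Qb := ursubmx _ in hQb.
  have sQb : RHinf Qb by apply: RHinf_ur.
  have hQK : Q = K + Q *m Gyu *m K.
    have e : (1%:M + Q *m Gyu) *m K = Q by rewrite hK mulmxA mulmxV // mul1mx.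
    by rewrite -{1}e mulmxDl mul1mx.
  pose X := block_mx Qb (Qb *m Gwu *m Q) (Q *m Gyv *m Qb) (Q + Q *m Gyv *m Qb *m Gwu *m Q).
  have sX : RHinf X by rewrite /X; rhs.
  have sG : RHinf (block_mx Gwv Gwu Gyv Gyu) by rhs.
  apply: (@int_stableR _ _ _ _ _ X); last 4 first.
  + by rhs.
  + by rhs.
  + by [].
  + by rhs.
  rewrite /X !mulmx_block add_block_mx; congr block_mx.
  all: rewrite ?mulmx0 ?addr0 ?add0r.
  + have hM' : forall k (A : 'M[tf C]_(k, nw)), A *m Gwu *m Q *m Gyv = 0.
      by move=> k A; rewrite -!mulmxA (mulmxA Gwu) hM mulmx0.
    by rewrite mulmxDl hM' mul0mx addr0.
  + by rewrite {1}hQK mulmxDr mulmxDl !mulmxA.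
  + have hM' : forall k (A : 'M[tf C]_(k, nw)), A *m Gwu *m Q *m Gyv = 0.
      by move=> k A; rewrite -!mulmxA (mulmxA Gwu) hM mulmx0.
    by rewrite {1}hQb mulmxDr (mulmxDl Q) hM' addr0 mulmxDl !mulmxA addrC.
  + set A := Q *m Gyv *m Qb *m Gwu.
    have e : A *m Q = A *m K + A *m Q *m Gyu *m K by rewrite {1}hQK mulmxDr !mulmxA.
    rewrite [in LHS]e {1}hQK !mulmxDl ?mulmxA -!addrA.
    by congr (_ + _); apply: addrCA.
Qed.
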